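(* Let $H=(v_1,\dots,v_6)$ be an embedded equilateral hexagon, considered up to translations and rotations, whose action-angle coordinates $(d_1,d_2,d_3,\theta_1,\theta_2,\theta_3)$ for the $T_{135}$ triangulation are defined. If the Joint Chirality-Curl satisfies $J(H)=(1,1)$ or $J(H)=(-1,1)$, then $\theta_i\in(0,\pi)$ for $i=1,2,3$.
   Context: An equilateral hexagon is an ordered 6-tuple $H=(v_1,\dots,v_6)$ in $\mathbb{R}^3$ with $\|v_i-v_{i+1}\|=1$ (indices mod 6), edges $e_i=[v_i,v_{i+1}]$, oriented $v_1\to v_2\to\cdots\to v_6\to v_1$; embedded means non-adjacent edges are disjoint and adjacent ones meet only at their common endpoint. Standard position: $v_1=0$, $v_3$ on the positive $x$-axis, $v_5$ in the $xy$-plane with positive $y$-coordinate. Action-angle coordinates ($T_{135}$ triangulation), defined when $v_1,v_3,v_5$ are not collinear and $0<d_i<2$: $d_1=\|v_3-v_1\|$, $d_2=\|v_5-v_3\|$, $d_3=\|v_1-v_5\|$; with $m_1,m_2,m_3$ the midpoints of $[v_1,v_3],[v_3,v_5],[v_5,v_1]$, $u_1,u_2,u_3$ the unit vectors in the $xy$-plane perpendicular to these segments pointing toward the opposite vertex of triangle $v_1v_3v_5$ (toward $v_5,v_1,v_3$ respectively), and $e_z=(0,0,1)$, the angles $\theta_i\in[0,2\pi)$ are determined by $v_{2i}=m_i+\tfrac12\sqrt{4-d_i^2}(\cos\theta_i\,u_i+\sin\theta_i\,e_z)$ (regular planar hexagon: all $\theta_i=\pi$). Joint Chirality-Curl: $curl(H)=\operatorname{sign}\big((v_3-v_1)\times(v_5-v_1)\cdot(v_2-v_1)\big)$.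 For $i=2,4,6$, $T_i$ is the open triangular disk with vertices $v_{i-1},v_i,v_{i+1}$, oriented by the right-hand rule (normal $(v_i-v_{i-1})\times(v_{i+1}-v_i)$), and $\Delta_i$ is the algebraic intersection number of $T_i$ with the oriented polygon $H$. Then $J(H)=(\Delta_2\Delta_4\Delta_6,\ \Delta_2^2\Delta_4^2\Delta_6^2\,curl(H))$. (By Calvo, $J(H)=(1,c)$ iff $H$ is a right-handed trefoil with curl $c$, $(-1,c)$ iff left-handed trefoil with curl $c$, $(0,0)$ iff unknot.) *)

(* Defs.v *)
From Stdlib Require Import Reals Lra ClassicalEpsilon.
Open Scope R_scope.

Record pt := Pt { px : R; py : R; pz : R }.

Definition origin : pt := Pt 0 0 0.
Definition ez : pt := Pt 0 0 1.
Definition padd (p q : pt) : pt := Pt (px p + px q) (py p + py q) (pz p + pz q).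
Definition psub (p q : pt) : pt := Pt (px p - px q) (py p - py q) (pz p - pz q).
Definition pscal (a : R) (p : pt) : pt := Pt (a * px p) (a * py p) (a * pz p).
Definition dot (p q : pt) : R := px p * px q + py p * py q + pz p * pz q.
Definition cross (p q : pt) : pt :=
  Pt (py p * pz q - pz p * py q) (pz p * px q - px p * pz q) (px p * py q - py p * px q).
Definition norm (p : pt) : R := sqrt (dot p p).
Definition dist (p q : pt) : R := norm (psub p q).
Definition midpoint (p q : pt) : pt := pscal (/ 2) (padd p q).

Definition Rsgn (x : R) : R :=
  if Rlt_dec 0 x then 1 else if Rlt_dec x 0 then -1 else 0.

Definition on_segment (p q x : pt) : Prop :=
  exists t, 0 <= t <= 1 /\ x = padd p (pscal t (psub q p)).

(** Hexagons: ordered 6-tuples of points; indices taken mod 6 (v_0 = v_6, v_7 = v_1) *)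
Record hexagon := Hex { v1 : pt; v2 : pt; v3 : pt; v4 : pt; v5 : pt; v6 : pt }.

Definition vtx (H : hexagon) (i : nat) : pt :=
  match (i mod 6)%nat with
  | 1%nat => v1 H | 2%nat => v2 H | 3%nat => v3 H
  | 4%nat => v4 H | 5%nat => v5 H | _ => v6 H
  end.

Definition on_edge (H : hexagon) (i : nat) (x : pt) : Prop :=
  on_segment (vtx H i) (vtx H (S i)) x.

Definition equilateral (H : hexagon) : Prop :=
  forall i : nat, (1 <= i <= 6)%nat -> dist (vtx H i) (vtx H (S i)) = 1.

Definition embedded (H : hexagon) : Prop :=
  forall (i j : nat) (x : pt), (1 <= i <= 6)%nat -> (1 <= j <= 6)%nat -> i <> j ->
    on_edge H i x -> on_edge H j x ->
    ((S i mod 6 = j mod 6)%nat /\ x = vtx H j) \/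
    ((S j mod 6 = i mod 6)%nat /\ x = vtx H i).

Definition standard_position (H : hexagon) : Prop :=
  v1 H = origin /\
  0 < px (v3 H) /\ py (v3 H) = 0 /\ pz (v3 H) = 0 /\
  pz (v5 H) = 0 /\ 0 < py (v5 H).

Definition d1 (H : hexagon) : R := dist (v3 H) (v1 H).
Definition d2 (H : hexagon) : R := dist (v5 H) (v3 H).
Definition d3 (H : hexagon) : R := dist (v1 H) (v5 H).

Definition perp_toward (p q r : pt) : pt :=
  let w := psub q p in
  let n0 := Pt (- py w) (px w) 0 in
  let n := pscal (/ norm n0) n0 in
  if Rlt_dec 0 (dot n (psub r (midpoint p q))) then n else pscal (-1) n.

(** theta is the angle coordinate of the vertex x lying over the diagonal [p,q]
    of triangle p q r (r the opposite vertex):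
    x = m + 1/2 sqrt(4 - d^2) (cos theta u + sin theta e_z), theta in [0, 2 pi) *)
Definition is_angle_coord (p q r x : pt) (theta : R) : Prop :=
  0 <= theta < 2 * PI /\
  x = padd (midpoint p q)
        (pscal (/ 2 * sqrt (4 - (dist q p) ^ 2))
           (padd (pscal (cos theta) (perp_toward p q r)) (pscal (sin theta) ez))).

Definition action_angle_defined (H : hexagon) : Prop :=
  0 < d1 H < 2 /\ 0 < d2 H < 2 /\ 0 < d3 H < 2.

Definition curl (H : hexagon) : R :=
  Rsgn (dot (cross (psub (v3 H) (v1 H)) (psub (v5 H) (v1 H))) (psub (v2 H) (v1 H))).

Definition in_open_triangle (a b c x : pt) : Prop :=
  exists s r, 0 < s /\ 0 < r /\ s + r < 1 /\
    x = padd a (padd (pscal s (psub b a)) (pscal r (psub c a))).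

(** signed contribution of the oriented segment [p,q] to the algebraic intersection
    number with the open triangle (a,b,c), oriented by n = (b-a) x (c-b).
    A segment passing from the negative to the positive side of the plane through the
    open disk counts +1, the reverse -1; a segment with one endpoint on the plane (a
    vertex of the polygon in the disk) counts 1/2 of that, so that a vertex where the
    polygon pierces the disk counts +-1 in total and a vertex where it only touches
    counts 0. *)
Definition seg_contrib (a b c p q : pt) : R :=
  let n := cross (psub b a) (psub c b) in
  let h0 := dot n (psub p a) in
  let h1 := dot n (psub q a) in
  if Req_EM_T (Rsgn h0) (Rsgn h1) then 0 else
  let X := padd p (pscal (h0 / (h0 - h1)) (psub q p)) in
  if excluded_middle_informative (in_open_triangle a b c X)
  then (Rsgn h1 - Rsgn h0) / 2 else 0.

(** Delta_i : algebraic intersection number of T_i = (v_{i-1}, v_i, v_{i+1})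
    with the oriented polygon H (sum over the six edges) *)
Definition Delta (H : hexagon) (i : nat) : R :=
  let a := vtx H (i + 5) in
  let b := vtx H i in
  let c := vtx H (S i) in
  seg_contrib a b c (vtx H 1) (vtx H 2) + seg_contrib a b c (vtx H 2) (vtx H 3) +
  seg_contrib a b c (vtx H 3) (vtx H 4) + seg_contrib a b c (vtx H 4) (vtx H 5) +
  seg_contrib a b c (vtx H 5) (vtx H 6) + seg_contrib a b c (vtx H 6) (vtx H 7).

Definition J (H : hexagon) : R * R :=
  (Delta H 2 * Delta H 4 * Delta H 6,
   (Delta H 2) ^ 2 * (Delta H 4) ^ 2 * (Delta H 6) ^ 2 * curl H).

(* Main.v *)
Require Import Defs.
From Stdlib Require Import Reals.
From Stdlib Require Import Lra Psatz ClassicalEpsilon.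
Open Scope R_scope.

Definition hv (a b c x : pt) : R := dot (cross (psub b a) (psub c b)) (psub x a).
Definition sq (p q : pt) : R := dot (psub p q) (psub p q).

Lemma Rsgn0 : Rsgn 0 = 0.
Proof. unfold Rsgn; destruct (Rlt_dec 0 0); [lra|]; destruct (Rlt_dec 0 0); lra. Qed.

Lemma Rsgn_diff x y : Rsgn x <> Rsgn y -> (x <= 0 <= y \/ y <= 0 <= x) /\ x <> y.
Proof.
  unfold Rsgn; intros H.
  destruct (Rlt_dec 0 x), (Rlt_dec 0 y); try (exfalso; apply H; reflexivity);
  destruct (Rlt_dec x 0), (Rlt_dec y 0); try (exfalso; apply H; reflexivity);
  try lra.
Qed.

Lemma zl a b c p q : seg_contrib a b c p q <> 0 ->
 exists s r t, 0 < s /\ 0 < r /\ s + r < 1 /\ 0 <= t <= 1 /\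
 (hv a b c p = 0 -> t = 0) /\ (hv a b c q = 0 -> t = 1) /\
 ~(hv a b c p = 0 /\ hv a b c q = 0) /\
 px p + t*(px q - px p) = px a + s*(px b - px a) + r*(px c - px a) /\
 py p + t*(py q - py p) = py a + s*(py b - py a) + r*(py c - py a) /\
 pz p + t*(pz q - pz p) = pz a + s*(pz b - pz a) + r*(pz c - pz a).
Proof.
  unfold seg_contrib, hv. cbv zeta.
  set (h0 := dot (cross (psub b a) (psub c b)) (psub p a)).
  set (h1 := dot (cross (psub b a) (psub c b)) (psub q a)).
  destruct (Req_EM_T (Rsgn h0) (Rsgn h1)) as [E|E]; [intro N; lra|].
  destruct (excluded_middle_informative _) as [[s [r (Hs&Hr&Hsr&HX)]]|]; [|intro N; lra].
  intros _.
  destruct (Rsgn_diff _ _ E) as [Hc Hne].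
  assert (Hd : h0 - h1 <> 0) by lra.
  set (t := h0 / (h0 - h1)) in *.
  assert (Ht : t * (h0 - h1) = h0) by (unfold t; field; auto).
  exists s, r, t.
  pose proof (f_equal px HX) as Ex. pose proof (f_equal py HX) as Ey. pose proof (f_equal pz HX) as Ez.
  simpl in Ex, Ey, Ez.
  repeat split; try lra.
  all: try (destruct Hc; nra).
Qed.

Lemma hv_a a b c : hv a b c a = 0. Proof. unfold hv, dot, cross, psub; simpl; ring. Qed.
Lemma hv_b a b c : hv a b c b = 0. Proof. unfold hv, dot, cross, psub; simpl; ring. Qed.
Lemma hv_c a b c : hv a b c c = 0. Proof. unfold hv, dot, cross, psub; simpl; ring. Qed.

Lemma vert_a a b c s r : 0 < s -> 0 < r -> sq b a = 1 -> sq c b = 1 -> 0 < sq c a < 4 ->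
  px a = px a + s*(px b - px a) + r*(px c - px a) ->
  py a = py a + s*(py b - py a) + r*(py c - py a) ->
  pz a = pz a + s*(pz b - pz a) + r*(pz c - pz a) -> False.
Proof.
  unfold sq, dot, psub; simpl. intros Hs Hr Hu Hcb HD Ex Ey Ez.
  set (ux := px b - px a) in *. set (uy := py b - py a) in *. set (uz := pz b - pz a) in *.
  set (wx := px c - px a) in *. set (wy := py c - py a) in *. set (wz := pz c - pz a) in *.
  set (k := r / s).
  assert (Hx : ux = - k * wx) by (unfold k; field_simplify_eq; lra).
  assert (Hy : uy = - k * wy) by (unfold k; field_simplify_eq; lra).
  assert (Hz : uz = - k * wz) by (unfold k; field_simplify_eq; lra).
  assert (Hk : 0 < k) by (unfold k; apply Rdiv_lt_0_compat; lra).
  assert (E1 : px c - px b = wx - ux) by (unfold wx, ux; ring).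
  assert (E2 : py c - py b = wy - uy) by (unfold wy, uy; ring).
  assert (E3 : pz c - pz b = wz - uz) by (unfold wz, uz; ring).
  rewrite E1, E2, E3 in Hcb.
  fold wx wy wz in HD.
  rewrite Hx, Hy, Hz in Hu, Hcb.
  set (D := wx*wx+wy*wy+wz*wz) in *.
  assert (A1 : k*k*D = 1) by (refine (eq_trans _ Hu); unfold D; ring).
  assert (A2 : (1+k)*(1+k)*D = 1) by (refine (eq_trans _ Hcb); unfold D; ring).
  nra.
Qed.

Lemma vert_c a b c s r : 0 < s -> 0 < r -> s + r < 1 -> sq b a = 1 -> sq c b = 1 -> 0 < sq c a < 4 ->
  px c = px a + s*(px b - px a) + r*(px c - px a) ->
  py c = py a + s*(py b - py a) + r*(py c - py a) ->
  pz c = pz a + s*(pz b - pz a) + r*(pz c - pz a) -> False.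
Proof.
  unfold sq, dot, psub; simpl. intros Hs Hr Hsr Hu Hcb HD Ex Ey Ez.
  set (ux := px b - px a) in *. set (uy := py b - py a) in *. set (uz := pz b - pz a) in *.
  set (wx := px c - px a) in *. set (wy := py c - py a) in *. set (wz := pz c - pz a) in *.
  set (k := (1 - r) / s).
  assert (Hx : ux = k * wx) by (unfold k, wx, ux in *; field_simplify_eq; lra).
  assert (Hy : uy = k * wy) by (unfold k, wy, uy in *; field_simplify_eq; lra).
  assert (Hz : uz = k * wz) by (unfold k, wz, uz in *; field_simplify_eq; lra).
  assert (Hk : 0 < k) by (unfold k; apply Rdiv_lt_0_compat; lra).
  assert (E1 : px c - px b = wx - ux) by (unfold wx, ux; ring).
  assert (E2 : py c - py b = wy - uy) by (unfold wy, uy; ring).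
  assert (E3 : pz c - pz b = wz - uz) by (unfold wz, uz; ring).
  rewrite E1, E2, E3 in Hcb.
  fold wx wy wz in HD.
  rewrite Hx, Hy, Hz in Hu, Hcb.
  set (D := wx*wx+wy*wy+wz*wz) in *.
  assert (A1 : k*k*D = 1) by (refine (eq_trans _ Hu); unfold D; ring).
  assert (A2 : (1-k)*(1-k)*D = 1) by (refine (eq_trans _ Hcb); unfold D; ring).
  assert (A3 : (1 - 2*k) * D = 0) by nra.
  destruct (Rmult_integral _ _ A3); nra.
Qed.

Lemma pt_t1 p x t : t = 1 -> padd p (pscal t (psub x p)) = x.
Proof. intros ->; destruct p, x; unfold padd, pscal, psub; simpl; f_equal; ring. Qed.
Lemma pt_t0 x q t : t = 0 -> padd x (pscal t (psub q x)) = x.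
Proof. intros ->; destruct q, x; unfold padd, pscal, psub; simpl; f_equal; ring. Qed.

Lemma cancel a b c p x q : hv a b c x = 0 -> Rsgn (hv a b c p) = Rsgn (hv a b c q) ->
  seg_contrib a b c p x + seg_contrib a b c x q = 0.
Proof.
  unfold seg_contrib, hv. cbv zeta. intros Hx Hs.
  rewrite Hx in *. rewrite Rsgn0 in *.
  set (hp := dot (cross (psub b a) (psub c b)) (psub p a)) in *.
  set (hq := dot (cross (psub b a) (psub c b)) (psub q a)) in *.
  destruct (Req_EM_T (Rsgn hp) 0) as [E1|E1];
  destruct (Req_EM_T 0 (Rsgn hq)) as [E2|E2]; try lra.
  assert (hp <> 0) by (intro Z; rewrite Z, Rsgn0 in E1; lra).
  assert (hq <> 0) by (intro Z; rewrite Z, Rsgn0 in E2; lra).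
  rewrite (pt_t1 p x (hp / (hp - 0))) by (field; lra).
  rewrite (pt_t0 x q (0 / (0 - hq))) by (field; lra).
  destruct (excluded_middle_informative _); lra.
Qed.

Lemma hv_flat a b c y : pz a = 0 -> pz b = 0 -> pz c = 0 ->
  hv a b c y = (px (psub b a) * py (psub c b) - py (psub b a) * px (psub c b)) * pz y.
Proof. intros. unfold hv, dot, cross, psub; simpl. rewrite H, H0, H1. ring. Qed.

Lemma Rsgn_mul N x y : 0 < x -> 0 < y -> Rsgn (N * x) = Rsgn (N * y).
Proof.
  intros. unfold Rsgn.
  destruct (Rlt_dec 0 (N*x)), (Rlt_dec 0 (N*y)); try reflexivity;
  destruct (Rlt_dec (N*x) 0), (Rlt_dec (N*y) 0); try reflexivity; exfalso; nra.
Qed.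

Lemma theta_pos p q r x th : is_angle_coord p q r x th -> pz p = 0 -> pz q = 0 ->
  0 < Defs.dist q p < 2 -> 0 < pz x -> 0 < th < PI.
Proof.
  intros [Hth Hx] Hp Hq Hd Hz.
  assert (Hperp : pz (perp_toward p q r) = 0).
  { unfold perp_toward. cbv zeta. destruct (Rlt_dec _ _); simpl; ring. }
  rewrite Hx in Hz. cbn [pz padd pscal midpoint ez] in Hz.
  rewrite Hperp, Hp, Hq in Hz.
  assert (HK : 0 < sqrt (4 - Defs.dist q p ^ 2)) by (apply sqrt_lt_R0; nra).
  assert (Hs : 0 < sin th) by nra.
  split.
  - destruct (Rle_lt_or_eq_dec 0 th (proj1 Hth)) as [|E]; auto.
    rewrite <- E, sin_0 in Hs; lra.
  - destruct (Rlt_le_dec th PI) as [|Hge]; auto.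
    assert (0 <= sin (th - PI)) by (apply sin_ge_0; lra).
    replace th with ((th - PI) + PI) in Hs by ring.
    rewrite neg_sin in Hs. lra.
Qed.

Lemma sq_of_dist1 p q : Defs.dist p q = 1 -> sq p q = 1.
Proof.
  unfold Defs.dist, norm. fold (sq p q). intros H.
  assert (0 <= sq p q) by (unfold sq, dot; nra).
  rewrite <- (sqrt_sqrt (sq p q)) by auto. rewrite H; ring.
Qed.
Lemma sq_of_d p q : 0 < Defs.dist p q < 2 -> 0 < sq p q < 4.
Proof.
  unfold Defs.dist, norm. fold (sq p q). intros H.
  assert (0 <= sq p q) by (unfold sq, dot; nra).
  rewrite <- (sqrt_sqrt (sq p q)) by auto. nra.
Qed.
Lemma sq_sym p q : sq p q = sq q p.
Proof. unfold sq, dot, psub; simpl; ring. Qed.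

Lemma Rsgn_pos x : Rsgn x = 1 -> 0 < x.
Proof. unfold Rsgn; destruct (Rlt_dec 0 x); auto; destruct (Rlt_dec x 0); lra. Qed.

Lemma Delta2_eq a1 a2 a3 a4 a5 a6 : let H := Hex a1 a2 a3 a4 a5 a6 in
  Defs.Delta H 2 = seg_contrib a1 a2 a3 a1 a2 + seg_contrib a1 a2 a3 a2 a3 +
  seg_contrib a1 a2 a3 a3 a4 + seg_contrib a1 a2 a3 a4 a5 +
  seg_contrib a1 a2 a3 a5 a6 + seg_contrib a1 a2 a3 a6 a1.
Proof. reflexivity. Qed.
Lemma Delta4_eq a1 a2 a3 a4 a5 a6 : let H := Hex a1 a2 a3 a4 a5 a6 in
  Defs.Delta H 4 = seg_contrib a3 a4 a5 a1 a2 + seg_contrib a3 a4 a5 a2 a3 +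
  seg_contrib a3 a4 a5 a3 a4 + seg_contrib a3 a4 a5 a4 a5 +
  seg_contrib a3 a4 a5 a5 a6 + seg_contrib a3 a4 a5 a6 a1.
Proof. reflexivity. Qed.
Lemma Delta6_eq a1 a2 a3 a4 a5 a6 : let H := Hex a1 a2 a3 a4 a5 a6 in
  Defs.Delta H 6 = seg_contrib a5 a6 a1 a1 a2 + seg_contrib a5 a6 a1 a2 a3 +
  seg_contrib a5 a6 a1 a3 a4 + seg_contrib a5 a6 a1 a4 a5 +
  seg_contrib a5 a6 a1 a5 a6 + seg_contrib a5 a6 a1 a6 a1.
Proof. reflexivity. Qed.


Ltac kill :=
  match goal with |- ?e = 0 =>
    destruct (Req_dec e 0) as [?|Hne]; [assumption|exfalso;
    destruct (zl _ _ _ _ _ Hne) as (s&r&t&Hs&Hr&Hsr&Ht&Hp0&Hq0&Hpq&Ex&Ey&Ez)]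
  end.

Ltac hvt := first [apply hv_a|apply hv_b|apply hv_c].

Ltac zkill :=
  kill; first [ match goal with Hq: ~(_ /\ _) |- _ => apply Hq; split; hvt end
              | nra ].

Ltac six t :=
  match goal with |- ?x1 + ?x2 + ?x3 + ?x4 + ?x5 + ?x6 = 0 =>
    assert (x1 = 0) by t; assert (x2 = 0) by t; assert (x3 = 0) by t;
    assert (x4 = 0) by t; assert (x5 = 0) by t; assert (x6 = 0) by t; lra
  end.

Ltac zk Z1 Z3 Z5 :=
  kill; first [ match goal with Hq: ~(_ /\ _) |- _ => apply Hq; split; hvt end
              | match goal with Ez : pz _ + _ * (pz _ - pz _) = _ |- _ =>
                  rewrite ?Z1, ?Z3, ?Z5 in Ez; nra end ].

Lemma case1 a1 a2 a3 a4 a5 a6 : pz a1 = 0 -> pz a3 = 0 -> pz a5 = 0 -> 0 < pz a2 ->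
  pz a4 <= 0 -> pz a6 <= 0 ->
  seg_contrib a1 a2 a3 a1 a2 + seg_contrib a1 a2 a3 a2 a3 +
  seg_contrib a1 a2 a3 a3 a4 + seg_contrib a1 a2 a3 a4 a5 +
  seg_contrib a1 a2 a3 a5 a6 + seg_contrib a1 a2 a3 a6 a1 = 0.
Proof. intros Z1 Z3 Z5 P2 P4 P6. six ltac:(zk Z1 Z3 Z5). Qed.

Lemma case2 a1 a2 a3 a4 a5 a6 : pz a1 = 0 -> pz a3 = 0 -> pz a5 = 0 -> 0 < pz a2 ->
  pz a4 < 0 -> 0 < pz a6 ->
  seg_contrib a3 a4 a5 a1 a2 + seg_contrib a3 a4 a5 a2 a3 +
  seg_contrib a3 a4 a5 a3 a4 + seg_contrib a3 a4 a5 a4 a5 +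
  seg_contrib a3 a4 a5 a5 a6 + seg_contrib a3 a4 a5 a6 a1 = 0.
Proof. intros Z1 Z3 Z5 P2 P4 P6. six ltac:(zk Z1 Z3 Z5). Qed.

Lemma case3 a1 a2 a3 a4 a5 a6 : pz a1 = 0 -> pz a3 = 0 -> pz a5 = 0 -> 0 < pz a2 ->
  0 < pz a4 -> pz a6 < 0 ->
  seg_contrib a5 a6 a1 a1 a2 + seg_contrib a5 a6 a1 a2 a3 +
  seg_contrib a5 a6 a1 a3 a4 + seg_contrib a5 a6 a1 a4 a5 +
  seg_contrib a5 a6 a1 a5 a6 + seg_contrib a5 a6 a1 a6 a1 = 0.
Proof. intros Z1 Z3 Z5 P2 P4 P6. six ltac:(zk Z1 Z3 Z5). Qed.

Lemma case2f a1 a2 a3 a4 a5 a6 : pz a1 = 0 -> pz a3 = 0 -> pz a5 = 0 -> 0 < pz a2 ->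
  pz a4 = 0 -> 0 < pz a6 ->
  sq a4 a3 = 1 -> sq a5 a4 = 1 -> 0 < sq a5 a3 < 4 ->
  seg_contrib a3 a4 a5 a1 a2 + seg_contrib a3 a4 a5 a2 a3 +
  seg_contrib a3 a4 a5 a3 a4 + seg_contrib a3 a4 a5 a4 a5 +
  seg_contrib a3 a4 a5 a5 a6 + seg_contrib a3 a4 a5 a6 a1 = 0.
Proof.
  intros Z1 Z3 Z5 P2 P4 P6 S1 S2 S3.
  assert (C : seg_contrib a3 a4 a5 a6 a1 + seg_contrib a3 a4 a5 a1 a2 = 0).
  { apply cancel.
    - rewrite hv_flat by auto. rewrite Z1; ring.
    - rewrite !hv_flat by auto. apply Rsgn_mul; auto. }
  assert (seg_contrib a3 a4 a5 a2 a3 = 0).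
  { kill. assert (t = 1) by (apply Hq0; apply hv_a). subst t.
    apply (vert_a a3 a4 a5 s r); auto;
    [rewrite <- Ex | rewrite <- Ey | rewrite <- Ez]; ring. }
  assert (seg_contrib a3 a4 a5 a5 a6 = 0).
  { kill. assert (t = 0) by (apply Hp0; apply hv_c). subst t.
    apply (vert_c a3 a4 a5 s r); auto;
    [rewrite <- Ex | rewrite <- Ey | rewrite <- Ez]; ring. }
  assert (seg_contrib a3 a4 a5 a3 a4 = 0) by (kill; apply Hpq; split; hvt).
  assert (seg_contrib a3 a4 a5 a4 a5 = 0) by (kill; apply Hpq; split; hvt).
  lra.
Qed.

Lemma case3f a1 a2 a3 a4 a5 a6 : pz a1 = 0 -> pz a3 = 0 -> pz a5 = 0 -> 0 < pz a2 ->
  0 < pz a4 -> pz a6 = 0 ->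
  sq a6 a5 = 1 -> sq a1 a6 = 1 -> 0 < sq a1 a5 < 4 ->
  seg_contrib a5 a6 a1 a1 a2 + seg_contrib a5 a6 a1 a2 a3 +
  seg_contrib a5 a6 a1 a3 a4 + seg_contrib a5 a6 a1 a4 a5 +
  seg_contrib a5 a6 a1 a5 a6 + seg_contrib a5 a6 a1 a6 a1 = 0.
Proof.
  intros Z1 Z3 Z5 P2 P4 P6 S1 S2 S3.
  assert (C : seg_contrib a5 a6 a1 a2 a3 + seg_contrib a5 a6 a1 a3 a4 = 0).
  { apply cancel.
    - rewrite hv_flat by auto. rewrite Z3; ring.
    - rewrite !hv_flat by auto. apply Rsgn_mul; auto. }
  assert (seg_contrib a5 a6 a1 a4 a5 = 0).
  { kill. assert (t = 1) by (apply Hq0; apply hv_a). subst t.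
    apply (vert_a a5 a6 a1 s r); auto;
    [rewrite <- Ex | rewrite <- Ey | rewrite <- Ez]; ring. }
  assert (seg_contrib a5 a6 a1 a1 a2 = 0).
  { kill. assert (t = 0) by (apply Hp0; apply hv_c). subst t.
    apply (vert_c a5 a6 a1 s r); auto;
    [rewrite <- Ex | rewrite <- Ey | rewrite <- Ez]; ring. }
  assert (seg_contrib a5 a6 a1 a5 a6 = 0) by (kill; apply Hpq; split; hvt).
  assert (seg_contrib a5 a6 a1 a6 a1 = 0) by (kill; apply Hpq; split; hvt).
  lra.
Qed.

Theorem mainTheorem2 (H : hexagon) (theta1 theta2 theta3 : R) :
  equilateral H -> embedded H -> standard_position H ->
  action_angle_defined H ->
  is_angle_coord (v1 H) (v3 H) (v5 H) (v2 H) theta1 ->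
  is_angle_coord (v3 H) (v5 H) (v1 H) (v4 H) theta2 ->
  is_angle_coord (v5 H) (v1 H) (v3 H) (v6 H) theta3 ->
  (J H = (1, 1) \/ J H = (-1, 1)) ->
  (0 < theta1 < PI) /\ (0 < theta2 < PI) /\ (0 < theta3 < PI).
Proof.
  intros Heq _ Hstd Had Ht1 Ht2 Ht3 HJ.
  assert (Hcurl : curl H = 1 /\ Defs.Delta H 2 <> 0 /\ Defs.Delta H 4 <> 0 /\ Defs.Delta H 6 <> 0).
  { unfold J in HJ. destruct HJ as [E|E]; injection E; intros E2 E1;
    assert (Hp2 : (Defs.Delta H 2 * Defs.Delta H 4 * Defs.Delta H 6)^2 = 1) by (rewrite E1; ring);
    assert (Hc: curl H = 1) by (transitivity ((Defs.Delta H 2 * Defs.Delta H 4 * Defs.Delta H 6)^2 * curl H);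
      [rewrite Hp2; ring | refine (eq_trans _ E2); ring]);
    repeat split; auto; intro Z; rewrite Z in E1; lra. }
  destruct Hcurl as (Hc & N2 & N4 & N6).
  pose proof (Heq 3%nat ltac:(lia)) as L3. pose proof (Heq 4%nat ltac:(lia)) as L4.
  pose proof (Heq 5%nat ltac:(lia)) as L5. pose proof (Heq 6%nat ltac:(lia)) as L6.
  clear Heq.
  unfold action_angle_defined, d1, d2, d3 in Had. destruct Had as (A1 & A2 & A3).
  destruct H as [a1 a2 a3 a4 a5 a6].
  pose proof (Delta2_eq a1 a2 a3 a4 a5 a6) as D2. pose proof (Delta4_eq a1 a2 a3 a4 a5 a6) as D4.
  pose proof (Delta6_eq a1 a2 a3 a4 a5 a6) as D6. cbv zeta in D2, D4, D6.
  unfold standard_position in Hstd. simpl in Hstd, Hc, Ht1, Ht2, Ht3, A1, A2, A3, L3, L4, L5, L6.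
  destruct Hstd as (E1 & Hx3 & Hy3 & Hz3 & Hz5 & Hy5).
  assert (Hx1 : px a1 = 0) by (rewrite E1; reflexivity).
  assert (Hy1 : py a1 = 0) by (rewrite E1; reflexivity).
  assert (Hz1 : pz a1 = 0) by (rewrite E1; reflexivity).
  clear E1.
  assert (Hz2 : 0 < pz a2).
  { unfold curl in Hc. simpl in Hc. apply Rsgn_pos in Hc.
    unfold dot, cross, psub in Hc; simpl in Hc.
    rewrite Hx1, Hy1, Hz1, Hy3, Hz3, Hz5 in Hc.
    destruct (Rlt_le_dec 0 (pz a2)); auto. exfalso.
    assert (0 < px a3 * py a5) by nra. nra. }
  apply sq_of_dist1 in L3, L4, L5, L6.
  pose proof (sq_of_d _ _ A2) as S2. pose proof (sq_of_d _ _ A3) as S3.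
  assert (Hz46 : 0 < pz a4 /\ 0 < pz a6).
  { destruct (Rle_lt_dec (pz a4) 0) as [h4|h4]; destruct (Rle_lt_dec (pz a6) 0) as [h6|h6].
    - exfalso; apply N2; rewrite D2; apply case1; auto.
    - exfalso; apply N4; rewrite D4. destruct (Rle_lt_or_eq_dec _ _ h4).
      + apply case2; auto.
      + apply case2f; auto; rewrite sq_sym; auto.
    - exfalso; apply N6; rewrite D6. destruct (Rle_lt_or_eq_dec _ _ h6).
      + apply case3; auto.
      + apply case3f; auto; rewrite sq_sym; auto.
    - auto. }
  destruct Hz46 as [Hz4 Hz6].
  split; [|split].
  - eapply theta_pos; eauto.
  - eapply theta_pos; eauto.
  - eapply theta_pos; eauto.
Qed.
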